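(* If $\gamma<\frac14$, then for every $r$ and every $x\in S_r$: (1) $|x-\mu_s|\ge\left(\frac12-2\gamma\right)|\mu_r-\mu_s|$ for all $s\ne r$; (2) $|x-\mu_r|\le\frac{1}{1-4\gamma}|x-\mu_s|$ for all $s\ne r$.
   Context: $\mu_1,\dots,\mu_\beta$ are distinct real numbers (means of $\beta$ distributions) and $\nu_1,\dots,\nu_\beta$ are real numbers (cluster centers). $\Delta_s=|\mu_s-\nu_s|$ and $\gamma=\max_{s,\,r\ne s}\frac{\Delta_s}{|\mu_r-\mu_s|}$. For a finite set of real points, $S_r$ is the set of points $x$ with $|x-\nu_r|\le|x-\nu_s|$ for every $s$. *)

(* Defs.v *)
From mathcomp Require Import all_boot all_order all_algebra.
Set Implicit Arguments. Unset Strict Implicit. Unset Printing Implicit Defensive.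
Import Order.TTheory GRing.Theory Num.Theory.
Local Open Scope ring_scope.

(* beta distributions indexed by 'I_beta; mu = means, nu = cluster centers. *)

Definition Delta (R : realFieldType) (beta : nat) (mu nu : 'I_beta -> R)
  (s : 'I_beta) : R := `|mu s - nu s|.

(* gamma = max_{s, r <> s} Delta_s / |mu_r - mu_s|  (all terms are >= 0,
   so starting the max from 0 does not change it when there is a pair) *)
Definition gamma (R : realFieldType) (beta : nat) (mu nu : 'I_beta -> R) : R :=
  \big[Num.max/0]_(s < beta)
     \big[Num.max/0]_(r < beta | r != s) (Delta mu nu s / `|mu r - mu s|).

Definition S_r (R : realFieldType) (beta : nat) (X : seq R)
  (nu : 'I_beta -> R) (r : 'I_beta) : seq R :=
  [seq x <- X | [forall s : 'I_beta, `|x - nu r| <= `|x - nu s|]].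

(* Main.v *)
Require Import Defs.
From mathcomp Require Import all_boot all_order all_algebra ring lra.
Import Order.TTheory GRing.Theory Num.Theory.
Local Open Scope ring_scope.

Lemma bmax_ge (R : realFieldType) (I : eqType) (s : seq I) (P : pred I) (F : I -> R) j :
  j \in s -> P j -> F j <= \big[Num.max/0]_(i <- s | P i) F i.
Proof.
elim: s => [//|a s IH]; rewrite inE big_cons => /orP [/eqP<- Pj|js Pj].
  by rewrite Pj le_max lexx.
case: (P a); last exact: IH.
by rewrite le_max IH ?orbT.
Qed.

Lemma bmax_ge0 (R : realFieldType) (I : Type) (s : seq I) (P : pred I) (F : I -> R) :
  0 <= \big[Num.max/0]_(i <- s | P i) F i.
Proof.
elim: s => [|a s IH]; rewrite ?big_nil // big_cons; case: (P a) => //.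
by rewrite le_max IH orbT.
Qed.

Lemma gamma_ge (R : realFieldType) (beta : nat) (mu nu : 'I_beta -> R) s r :
  r != s -> Delta mu nu s / `|mu r - mu s| <= gamma mu nu.
Proof.
move=> rs; rewrite /gamma.
have h1 := @bmax_ge _ _ _ xpredT (fun s0 : 'I_beta => \big[Num.max/0]_(r0 < beta | r0 != s0) (Delta mu nu s0 / `|mu r0 - mu s0|)) s (mem_index_enum s) (erefl true).
have h2 := @bmax_ge _ _ _ (fun r0 => r0 != s) (fun r0 => Delta mu nu s / `|mu r0 - mu s|) r (mem_index_enum r) rs.
exact: le_trans h2 h1.
Qed.

Lemma gamma_ge0 (R : realFieldType) (beta : nat) (mu nu : 'I_beta -> R) :
  0 <= gamma mu nu.
Proof. exact: bmax_ge0. Qed.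

Arguments gamma_ge {R beta} mu nu s r.
Arguments gamma_ge0 {R beta} mu nu.

Theorem lemma8 (R : realFieldType) (beta : nat) (mu nu : 'I_beta -> R)
  (X : seq R) :
  injective mu ->
  gamma mu nu < 1 / 4 ->
  forall (r : 'I_beta) (x : R), x \in S_r X nu r ->
    (forall s : 'I_beta, s != r ->
       (1 / 2 - 2 * gamma mu nu) * `|mu r - mu s| <= `|x - mu s|) /\
    (forall s : 'I_beta, s != r ->
       `|x - mu r| <= (1 - 4 * gamma mu nu)^-1 * `|x - mu s|).
Proof.
move=> inj g14 r x; rewrite mem_filter => /andP [/forallP H _].
set g := gamma mu nu.
rewrite -/g in g14.
have g0 : 0 <= g := gamma_ge0 mu nu.
have key : forall s, s != r ->
   `|x - mu r| <= `|x - mu s| + 2 * g * `|mu r - mu s| /\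
   `|mu r - mu s| <= `|x - mu r| + `|x - mu s|.
  move=> s sr.
  have dpos : 0 < `|mu r - mu s|.
    by rewrite normr_gt0 subr_eq0; apply/eqP => /inj /eqP; rewrite eq_sym (negbTE sr).
  have dpos2 : 0 < `|mu s - mu r| by rewrite distrC.
  have Ds : Delta mu nu s <= g * `|mu r - mu s|.
    by rewrite -ler_pdivrMr // (gamma_ge mu nu s r) // eq_sym.
  have Dr : Delta mu nu r <= g * `|mu r - mu s|.
    by rewrite [`|mu r - mu s|]distrC -ler_pdivrMr // (gamma_ge mu nu r s).
  move: Ds Dr; rewrite /Delta => Ds Dr.
  have h1 := H s.
  have t1 : `|x - mu r| <= `|x - nu r| + `|mu r - nu r|.
    by rewrite (_ : x - mu r = (x - nu r) - (mu r - nu r)); [apply: ler_normB | rewrite opprB addrA subrK].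
  have t2 : `|x - nu s| <= `|x - mu s| + `|mu s - nu s|.
    by rewrite (_ : x - nu s = (x - mu s) + (mu s - nu s)); [apply: ler_normD | rewrite addrA subrK].
  have t3 := ler_normB (x - mu s) (x - mu r).
  have e3 : (x - mu s) - (x - mu r) = mu r - mu s by ring.
  rewrite e3 in t3.
  split; lra.
clearbody g.
split=> s sr; have [k1 k2] := key s sr.
  have gd := mulr_ge0 g0 (normr_ge0 (mu r - mu s)).
  lra.
have gd := mulr_ge0 g0 (normr_ge0 (mu r - mu s)).
have c : 0 < 1 - 4 * g by lra.
rewrite mulrC ler_pdivlMr //.
have B : (1 - 4 * g) * `|mu r - mu s| <= 2 * `|x - mu s| by nra.
have B2 : 4 * g * ((1 - 4 * g) * `|mu r - mu s|) <= 4 * g * (2 * `|x - mu s|).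
  by apply: ler_wpM2l; lra.
nra.
Qed.
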